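(* Let $Z=\{P_1,\dots,P_r\}\subset\mathbb{P}^2$ be a finite set of points and let $m>n$ be positive integers. Put $\beta=\alpha(I(mZ))$, $\gamma=\alpha(I(nZ))$ and $\alpha=\beta-\gamma$. Let $C$ be an effective divisor of degree $\beta$ with $\operatorname{ord}_{P_i}C\ge m$ for all $i$ (i.e. $C\in I(mZ)_\beta$), and suppose $C=C_1+C_2$ is a sum of two nonzero effective divisors. For $j=1,2$ let $\beta_j=\deg(C_j)$, $m_i^{(j)}=\operatorname{ord}_{P_i}C_j$, $\mathbf{m}^{(j)}=(m_1^{(j)},\dots,m_r^{(j)})$, $n_i^{(j)}=\max\{m_i^{(j)}-(m-n),0\}$ and $\mathbf{n}^{(j)}=(n_1^{(j)},\dots,n_r^{(j)})$. Then for $j=1,2$: (i) $\beta_j=\alpha(I(\mathbf{m}^{(j)}Z))$; (ii) $\alpha(I(\mathbf{m}^{(j)}Z))-\alpha(I(\mathbf{n}^{(j)}Z))\le\alpha$.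
   Context: Work over an algebraically closed field $\mathbb{K}$ of characteristic zero, $R=\mathbb{K}[x_0,x_1,x_2]$, $\mathbb{P}^2=\operatorname{Proj}R$. For a point $P$, $I(P)\subset R$ is its homogeneous maximal ideal. For $Z=\{P_1,\dots,P_r\}$ and a vector $\mathbf{m}=(m_1,\dots,m_r)$ of non-negative integers, $I(\mathbf{m}Z)=I(P_1)^{m_1}\cap\dots\cap I(P_r)^{m_r}$ (with $I(P)^0=R$); for an integer $m$, $I(mZ)=I(\mathbf{m}Z)$ with $\mathbf{m}=(m,\dots,m)$, which is the $m$-th symbolic power of $I(Z)$. For a homogeneous ideal $J=\bigoplus_n J_n$, the initial degree is $\alpha(J)=\min\{n: J_n\ne0\}$ (so $\alpha(R)=0$). A divisor ''in $J_n$'' means a plane curve (effective divisor) defined by a nonzero element of $J_n$; $\operatorname{ord}_P$ denotes the multiplicity of a divisor at $P$. *)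

(* Defs.v *)
From HB Require Import structures.
From mathcomp Require Import all_boot all_order all_algebra.
From mathcomp Require Import mpoly.
From Stdlib Require Import ClassicalEpsilon.
Set Implicit Arguments. Unset Strict Implicit. Unset Printing Implicit Defensive.
Import Order.TTheory GRing.Theory Num.Theory.
Local Open Scope ring_scope.

Section PlaneCurves.
Variable K : fieldType.

(* A point P of P^2 is given by homogeneous coordinates v : 'I_3 -> K, v <> 0. *)
Definition proj_point (v : 'I_3 -> K) : Prop := exists i, v i != 0.

Definition shift (v : 'I_3 -> K) (f : {mpoly K[3]}) : {mpoly K[3]} :=
  f \mPo [tuple ('X_i + (v i)%:MP) | i < 3].

(* f \in I(P)^k : every monomial of f(v + X) has total degree >= k
   (for homogeneous f this is exactly membership in the k-th power of the
   homogeneous maximal ideal of P). *)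
Definition in_Ipow (v : 'I_3 -> K) (k : nat) (f : {mpoly K[3]}) : Prop :=
  forall mon : 'X_{1..3}, (mdeg mon < k)%N -> (shift v f)@_mon = 0.

(* multiplicity ord_P of the curve f = 0 at P : lowest total degree of a
   monomial of f(v + X) (meaningful for f <> 0). *)
Definition mult (v : 'I_3 -> K) (f : {mpoly K[3]}) : nat :=
  let g := shift v f in \big[minn/msize g]_(mon <- msupp g) mdeg mon.

Definition in_IZ (r : nat) (P : 'I_r -> 'I_3 -> K) (ms : 'I_r -> nat)
  (f : {mpoly K[3]}) : Prop := forall i, in_Ipow (P i) (ms i) f.

Definition IZ_nonzero_in_deg r (P : 'I_r -> 'I_3 -> K) ms (d : nat) : Prop :=
  exists f : {mpoly K[3]}, [/\ f != 0, f \is d.-homog & in_IZ P ms f].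

Definition is_initdeg r (P : 'I_r -> 'I_3 -> K) ms (a : nat) : Prop :=
  IZ_nonzero_in_deg P ms a /\ forall d, IZ_nonzero_in_deg P ms d -> (a <= d)%N.

(* alpha(I(ms Z)) = min { d : I(ms Z)_d <> 0 } (this minimum always exists). *)
Definition initdeg r (P : 'I_r -> 'I_3 -> K) (ms : 'I_r -> nat) : nat :=
  epsilon (inhabits 0%N) (is_initdeg P ms).

End PlaneCurves.

(* Main.v *)
Require Import Defs.
From HB Require Import structures.
From mathcomp Require Import all_boot all_order all_algebra.
From mathcomp Require Import mpoly.
From mathcomp.multinomials Require Import ssrcomplements.
From Stdlib Require Import ClassicalEpsilon Classical.
From mathcomp Require Import zify.
Set Implicit Arguments. Unset Strict Implicit. Unset Printing Implicit Defensive.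
Import Order.TTheory GRing.Theory Num.Theory.
Local Open Scope ring_scope.

Section Aux.
Variable K : fieldType.
Implicit Types (f g h : {mpoly K[3]}) (v : 'I_3 -> K).

Definition low h (k : nat) := forall mon : 'X_{1..3}, (mdeg mon < k)%N -> h@_mon = 0.

Lemma low_mono h a b : (b <= a)%N -> low h a -> low h b.
Proof. by move=> ba H mon lt; apply: H; exact: leq_trans lt ba. Qed.

Lemma lowM h g a b : low h a -> low g b -> low (h * g) (a + b)%N.
Proof.
move=> Ha Hb mon lt; rewrite mcoeffM big1 // => k /eqP E.
have D : mdeg mon = (mdeg k.1 + mdeg k.2)%N by rewrite -mdegD -E.
 case: (ltnP (mdeg k.1) a) => h1; first by rewrite Ha ?mul0r.
by rewrite Hb ?mulr0 // -(ltn_add2l (mdeg k.1)) -D (leq_trans lt) // leq_add2r.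
Qed.

Lemma mlastcM h g : (h * g)@_(mlast h + mlast g) = h@_(mlast h) * g@_(mlast g).
Proof.
have [->|nz_p] := eqVneq h 0; first by rewrite !mcoeff0 !mul0r mcoeff0.
have [->|nz_q] := eqVneq g 0; first by rewrite !mcoeff0 !mulr0 mcoeff0.
rewrite mpolyME (bigD1_seq (mlast h, mlast g)) /=; first last.
+ by rewrite allpairs_uniq ?msupp_uniq // => -[? ?] [].
+ by rewrite allpairs_f// !mlast_supp.
rewrite mcoeffD mcoeffZ mcoeffX eqxx mulr1.
rewrite big_seq_cond raddf_sum /= big1 ?addr0 //.
case=> m1 m2; rewrite in_allpairs//= -andbA; case/and3P.
move=> m1_in_p m2_in_q ne_m_lc; rewrite mcoeffZ mcoeffX.
move/mlast_lemc: m1_in_p; move/mlast_lemc: m2_in_q.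
rewrite le_eqVlt => /predU1P[m2E|]; last first.
  by move=> lt /lemc_lt_add /(_ lt) /gt_eqF ->; rewrite mulr0.
move: ne_m_lc; rewrite -m2E xpair_eqE eqxx andbT.
rewrite le_eqVlt eq_sym => /negbTE -> /=; rewrite eqm_add2r.
by move/gt_eqF=> ->; rewrite mulr0.
Qed.

Lemma bigmin_le (s : seq 'X_{1..3}) (F : 'X_{1..3} -> nat) a x :
  x \in s -> (\big[minn/a]_(y <- s) F y <= F x)%N.
Proof.
elim: s => //= y s IH; rewrite in_cons big_cons => /predU1P[->|/IH H].
  exact: geq_minl.
by rewrite geq_min H orbT.
Qed.

Lemma bigmin_ge (s : seq 'X_{1..3}) (F : 'X_{1..3} -> nat) a c :
  (c <= a)%N -> (forall x, x \in s -> c <= F x)%N ->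
  (c <= \big[minn/a]_(y <- s) F y)%N.
Proof.
move=> ca; elim: s => [|y s IH] H; first by rewrite big_nil.
rewrite big_cons leq_min H ?mem_head // IH // => x xs.
by apply: H; rewrite in_cons xs orbT.
Qed.

Lemma in_Ipow_mult v f : in_Ipow v (mult v f) f.
Proof.
move=> mon lt; apply/eqP; rewrite mcoeff_eq0; apply/negP => ms.
by move: lt; rewrite /mult ltnNge bigmin_le.
Qed.

Lemma mult_mlast v f : shift v f != 0 -> mult v f = mdeg (mlast (shift v f)).
Proof.
move=> nz; apply/eqP; rewrite eqn_leq; apply/andP; split.
  by apply: bigmin_le; exact: mlast_supp.
apply: bigmin_ge.
  by apply: ltnW; apply: msize_mdeg_lt; exact: mlast_supp.
by move=> x /mlast_lemc/lemc_mdeg.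
Qed.

Lemma mult_ge v f k : shift v f != 0 -> in_Ipow v k f -> (k <= mult v f)%N.
Proof.
move=> nz H; rewrite mult_mlast //; rewrite leqNgt; apply/negP => /H.
by move/eqP; rewrite mcoeff_eq0 mlast_supp.
Qed.

Lemma shiftM v f g : shift v (f * g) = shift v f * shift v g.
Proof. by rewrite /shift rmorphM. Qed.

Lemma mult_leD v f g : shift v f != 0 -> shift v g != 0 ->
  (mult v (f * g) <= mult v f + mult v g)%N.
Proof.
move=> nf ng; rewrite (mult_mlast nf) (mult_mlast ng) -mdegD /mult.
apply: bigmin_le; rewrite mcoeff_msupp shiftM mlastcM mulf_neq0 //.
  by rewrite -mcoeff_msupp mlast_supp.
by rewrite -mcoeff_msupp mlast_supp.
Qed.

Lemma comp_comp (p : {mpoly K[3]}) (lq lr : 3.-tuple {mpoly K[3]}) :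
  (p \mPo lq) \mPo lr = p \mPo [tuple (tnth lq i \mPo lr) | i < 3].
Proof.
rewrite [p \mPo lq]comp_mpolyEX [p \mPo [tuple _ | _ < _]]comp_mpolyEX.
rewrite (raddf_sum (comp_mpoly lr)) /=.
apply: eq_bigr => mon _.
rewrite comp_mpolyZ; congr (_ *: _); rewrite !comp_mpolyX rmorph_prod.
by apply: eq_bigr => i _; rewrite rmorphXn tnth_mktuple.
Qed.

Lemma shiftK v f : shift (fun i => - v i) (shift v f) = f.
Proof.
rewrite /shift comp_comp; apply: etrans (comp_mpoly_id f); congr comp_mpoly.
apply: eq_from_tnth => i; rewrite !tnth_mktuple comp_mpolyD comp_mpolyXU comp_mpolyC.
rewrite -tnth_nth tnth_mktuple -addrA -rmorphD /= addNr.
by rewrite (rmorph0 (@mpolyC 3 K)) addr0.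
Qed.

Lemma shift_neq0 v f : f != 0 -> shift v f != 0.
Proof.
apply: contraNneq => E; by rewrite -(shiftK v f) E /shift comp_mpoly0.
Qed.


Lemma ex_min (Q : nat -> Prop) : (exists d, Q d) -> exists a, Q a /\ forall d, Q d -> (a <= d)%N.
Proof.
move=> [d0 Qd0].
have H : forall N d, (d <= N)%N -> Q d -> exists a, Q a /\ forall d, Q d -> (a <= d)%N.
  elim=> [|N IH] d dN Qd.
    by exists d; split=> // e _; move: dN; rewrite leqn0 => /eqP ->.
  case: (classic (exists d', (d' < d)%N /\ Q d')) => [[d' [lt Qd']]|no].
    by apply: (IH d') => //; rewrite -ltnS (leq_trans lt dN).
  exists d; split=> // e Qe; rewrite leqNgt; apply/negP => lt; apply: no.
  by exists e.
exact: (H d0 d0).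
Qed.

Lemma initdegP r (P : 'I_r -> 'I_3 -> K) ms d :
  IZ_nonzero_in_deg P ms d -> is_initdeg P ms (initdeg P ms).
Proof. by move=> H; rewrite /initdeg; apply: epsilon_spec; apply: ex_min; exists d. Qed.

Lemma half r (P : 'I_r -> 'I_3 -> K) m n (Hnm : (n < m)%N) f1 f2 b1 b2 :
  f1 != 0 -> f2 != 0 -> f1 \is b1.-homog -> f2 \is b2.-homog ->
  f1 * f2 \is (initdeg P (fun _ => m)).-homog -> in_IZ P (fun _ => m) (f1 * f2) ->
  b1 = initdeg P (fun i => mult (P i) f1) /\
  (initdeg P (fun i => mult (P i) f1))%:Z - (initdeg P (fun i => (mult (P i) f1 - (m - n))%N))%:Z
   <= (initdeg P (fun _ => m))%:Z - (initdeg P (fun _ => n))%:Z.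
Proof.
move=> nz1 nz2 h1 h2 hf If.
have nzf : f1 * f2 != 0 by rewrite mulf_neq0.
have fhom : f1 * f2 \is (b1 + b2).-homog by apply: dhomogM.
have Eb : initdeg P (fun _ => m) = (b1 + b2)%N by exact: (dhomog_uniq nzf hf fhom).
have multf : forall i, (m <= mult (P i) f1 + mult (P i) f2)%N.
  move=> i; have s1 := shift_neq0 (P i) nz1; have s2 := shift_neq0 (P i) nz2.
  apply: leq_trans (mult_leD s1 s2); apply: mult_ge.
    exact: shift_neq0.
  exact: If.
have key : forall g d k (ms : 'I_r -> nat), g != 0 -> g \is d.-homog -> in_IZ P k g ->
    (forall i, ms i <= k i + mult (P i) f2)%N -> IZ_nonzero_in_deg P ms (d + b2).
  move=> g d k ms gnz gh gI le; exists (g * f2); split.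
  - by rewrite mulf_neq0.
  - exact: dhomogM.
  move=> i; change (low (shift (P i) (g * f2)) (ms i)); rewrite shiftM.
  exact: (low_mono (le i) (lowM (gI i : low (shift (P i) g) (k i)) (@in_Ipow_mult (P i) f2))).
have neM : IZ_nonzero_in_deg P (fun _ => m) (b1 + b2).
  by exists (f1 * f2); split.
have [_ Mmin] := initdegP neM.
have ne1 : IZ_nonzero_in_deg P (fun i => mult (P i) f1) b1.
  by exists f1; split=> // i; exact: (@in_Ipow_mult (P i) f1).
have [[g [gnz ghom gI]] gmin] := initdegP ne1.
have le1 := gmin _ ne1.
have := Mmin _ (key g _ _ (fun _ => m) gnz ghom gI multf).
rewrite Eb => le2.
have E1 : b1 = initdeg P (fun i => mult (P i) f1).
  by apply/eqP; rewrite eqn_leq le1 -(leq_add2r b2) le2.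
split=> //.
have neN : IZ_nonzero_in_deg P (fun i => (mult (P i) f1 - (m - n))%N) b1.
  exists f1; split=> // i; exact: (low_mono (leq_subr _ _) (@in_Ipow_mult (P i) f1)).
have [[g' [gnz' ghom' gI']] _] := initdegP neN.
have Hn : forall i, (n <= (mult (P i) f1 - (m - n)) + mult (P i) f2)%N.
  by move=> i; have := multf i; lia.
have nen := key g' _ _ (fun _ => n) gnz' ghom' gI' Hn.
have [_ nmin] := initdegP nen.
have le3 := nmin _ nen.
rewrite -E1; move: le3; lia.
Qed.

End Aux.

Theorem lemma2p1 (K : closedFieldType) (Kchar0 : [pchar K] =i pred0)
  (r : nat) (P : 'I_r -> 'I_3 -> K) (HP : forall i, proj_point (P i))
  (m n : nat) (Hn : (0 < n)%N) (Hnm : (n < m)%N)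
  (f f1 f2 : {mpoly K[3]}) (b1 b2 : nat)
  (Hf0 : f != 0)
  (Hfdeg : f \is (initdeg P (fun _ => m)).-homog)
  (HfI : in_IZ P (fun _ => m) f)
  (Hsum : f = f1 * f2)
  (Hf1 : f1 != 0) (Hf2 : f2 != 0)
  (Hb1 : (0 < b1)%N) (Hb2 : (0 < b2)%N)
  (Hf1deg : f1 \is b1.-homog) (Hf2deg : f2 \is b2.-homog) :
  let alpha := ((initdeg P (fun _ => m))%:Z - (initdeg P (fun _ => n))%:Z) in
  let mj g := fun i => mult (P i) g in
  let nj g := fun i => (mult (P i) g - (m - n))%N in
  [/\ b1 = initdeg P (mj f1), b2 = initdeg P (mj f2),
      (initdeg P (mj f1))%:Z - (initdeg P (nj f1))%:Z <= alpha
    & (initdeg P (mj f2))%:Z - (initdeg P (nj f2))%:Z <= alpha].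

Proof.
move=> alpha mj nj.
rewrite Hsum in Hfdeg HfI.
have [E1 I1] := @half K r P m n Hnm f1 f2 b1 b2 Hf1 Hf2 Hf1deg Hf2deg Hfdeg HfI.
rewrite [f1 * f2]mulrC in Hfdeg HfI.
have [E2 I2] := @half K r P m n Hnm f2 f1 b2 b1 Hf2 Hf1 Hf2deg Hf1deg Hfdeg HfI.
split; [exact: E1 | exact: E2 | exact: I1 | exact: I2].
Qed.
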